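(* For every integer $n\ge 0$, \[ d_{n,q}=\begin{cases} 1, & n=0,\\[4pt] \displaystyle\frac{[2]_q}{2}\frac{(-4)^n}{n!}D_{n,q}(0|1)-q\sum_{m=0}^{n-1}\frac{(-4)^{n-m-1}}{(n-m-1)!}D_{n-m-1,q}(0|1)\,C_m, & n\ge 1.\end{cases} \]
   Context: Let $p$ be a fixed odd prime, $\mathbb{C}_p$ the completion of the algebraic closure of $\mathbb{Q}_p$, with $|p|_p=1/p$. Let $q\in\mathbb{C}_p$ with $|1-q|_p<p^{-1/(p-1)}$, and $\log$ denotes the $p$-adic logarithm. Put $[x]_q=\frac{1-q^x}{1-q}$, so $[2]_q=1+q$. $C_m=\frac{1}{m+1}\binom{2m}{m}$ is the $m$-th Catalan number. The numbers $D_{n,q}(0|1)$ are defined by \[ \frac{2(q-1)+\frac{q-1}{\log q}\log(1+t)}{q^{2}(1+t)-1}=\sum_{n=0}^{\infty}D_{n,q}(0|1)\frac{t^n}{n!}. \] The $q$-analogues of the Catalan–Daehee numbers $d_{n,q}$ are defined by \[ \frac{q-1+\frac{q-1}{\log q}\cdot\frac12\log(1-4t)}{q\sqrt{1-4t}-1}=\sum_{n=0}^{\infty}d_{n,q}t^n, \] for $t\in\mathbb{C}_p$ with $|t|_p<p^{-1/(p-1)}$ (equivalently as power series in $t$). *)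

(* Defs.v *)
From HB Require Import structures.
From mathcomp Require Import all_boot all_order all_algebra.
Set Implicit Arguments. Unset Strict Implicit. Unset Printing Implicit Defensive.
Import Order.TTheory GRing.Theory.
Local Open Scope ring_scope.

Section PS.
Variable K : fieldType.

Definition ps := nat -> K.

Definition ps_mul (f g : ps) : ps :=
  fun n => \sum_(i < n.+1) f i * g (n - i)%N.

(* list of the first n+1 coefficients of the inverse of g (g 0 <> 0) *)
Fixpoint ps_inv_list (g : ps) (n : nat) : seq K :=
  match n with
  | 0 => [:: (g 0%N)^-1]
  | n'.+1 => let l := ps_inv_list g n' in
             rcons l (- (g 0%N)^-1 *
                      \sum_(i < n'.+1) g (n'.+1 - i)%N * nth 0 l i)
  end.

Definition ps_inv (g : ps) : ps := fun n => nth 0 (ps_inv_list g n) n.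

Definition ps_div (f g : ps) : ps := ps_mul f (ps_inv g).

(* the series of log(1 + c t) = sum_{n>=1} (-1)^(n+1) c^n t^n / n *)
Definition ps_log1p (c : K) : ps :=
  fun n => if n == 0%N then 0 else (-1) ^+ n.+1 * c ^+ n / n%:R.

Definition gbinom (a : K) (n : nat) : K :=
  (\prod_(i < n) (a - i%:R)) / (n`!)%:R.

(* the series of sqrt(1 - 4t) = (1 + (-4 t))^(1/2) *)
Definition ps_sqrt1m4 : ps := fun n => gbinom (2^-1) n * (-4) ^+ n.

(* the generating function of D_{n,q}(0|1), with lq standing for log q:
   (2(q-1) + (q-1)/lq * log(1+t)) / (q^2 (1+t) - 1) = sum D_n t^n / n! *)
Definition Dnum (q lq : K) : ps :=
  fun n => (if n == 0%N then 2 * (q - 1) else 0) + (q - 1) / lq * ps_log1p 1 n.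
Definition Dden (q : K) : ps :=
  fun n => if n == 0%N then q ^+ 2 - 1 else if n == 1%N then q ^+ 2 else 0.
Definition Dq (q lq : K) (n : nat) : K :=
  (n`!)%:R * ps_div (Dnum q lq) (Dden q) n.

(* the generating function of d_{n,q}:
   (q-1 + (q-1)/lq * (1/2) log(1-4t)) / (q sqrt(1-4t) - 1) = sum d_n t^n *)
Definition dnum (q lq : K) : ps :=
  fun n => (if n == 0%N then q - 1 else 0) + (q - 1) / lq * (2^-1 * ps_log1p (-4) n).
Definition dden (q : K) : ps :=
  fun n => q * ps_sqrt1m4 n - (if n == 0%N then 1 else 0).
Definition dq (q lq : K) (n : nat) : K := ps_div (dnum q lq) (dden q) n.

Definition catalan (m : nat) : K := ('C(m.*2, m))%:R / (m.+1)%:R.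

End PS.

(* Main.v *)
Require Import Defs.
From HB Require Import structures.
From mathcomp Require Import all_boot all_order all_algebra.
From mathcomp Require Import ring zify.
Import GRing.Theory.
Set Implicit Arguments. Unset Strict Implicit. Unset Printing Implicit Defensive.
Local Open Scope ring_scope.

Definition zz (K : fieldType) (n : nat) (p : {poly K}) :=
  forall i, (i <= n)%N -> p`_i = 0.
Definition tr (K : fieldType) (n : nat) (f : ps K) : {poly K} :=
  \poly_(i < n.+1) f i.

Lemma coef_tr (K : fieldType) n (f : ps K) i : (i <= n)%N -> (tr n f)`_i = f i.
Proof. by move=> h; rewrite /tr coef_poly ltnS h. Qed.

Lemma zzD (K : fieldType) n (p q : {poly K}) : zz n p -> zz n q -> zz n (p + q).
Proof. by move=> hp hq i hi; rewrite coefD hp // hq // addr0. Qed.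

Lemma zzN (K : fieldType) n (p : {poly K}) : zz n p -> zz n (- p).
Proof. by move=> hp i hi; rewrite coefN hp // oppr0. Qed.

Lemma zzM (K : fieldType) n (r p : {poly K}) : zz n p -> zz n (r * p).
Proof.
move=> hp i hi; rewrite coefM big1 // => j _.
rewrite hp ?mulr0 //; apply: leq_trans hi; exact: leq_subr.
Qed.

Lemma zzE (K : fieldType) n (p q : {poly K}) : p = q -> zz n q -> zz n p.
Proof. by move=> ->. Qed.

Lemma zz_mul (K : fieldType) n (f g : ps K) :
  zz n (tr n (ps_mul f g) - tr n f * tr n g).
Proof.
move=> i hi; rewrite coefB coef_tr // coefM /ps_mul; apply/eqP; rewrite subr_eq0; apply/eqP.
apply: eq_bigr => j _; have hj := ltn_ord j.
rewrite !coef_tr //; lia.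
Qed.

Lemma zz_tr (K : fieldType) n (f : ps K) (p : {poly K}) :
  (forall i, (i <= n)%N -> f i = p`_i) -> zz n (tr n f - p).
Proof. by move=> h i hi; rewrite coefB coef_tr // h // subrr. Qed.

Lemma zz2 (K : fieldType) n (p : {poly K}) : 2 != 0 :> K -> zz n (2 * p) -> zz n p.
Proof.
move=> h2 hp i hi; have := hp i hi; rewrite mulr_natl coefMn -mulr_natr.
by move/eqP; rewrite mulf_eq0 (negbTE h2) orbF => /eqP.
Qed.

Lemma size_inv (K : fieldType) (g : ps K) n : size (ps_inv_list g n) = n.+1.
Proof. by elim: n => [|n IH] //=; rewrite size_rcons IH. Qed.

Lemma nth_inv (K : fieldType) (g : ps K) n i : (i <= n)%N ->
  nth 0 (ps_inv_list g n) i = ps_inv g i.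
Proof.
elim: n => [|n IH] hi; first by move: hi; rewrite leqn0 => /eqP ->.
rewrite leq_eqVlt in hi; case/orP: hi => [/eqP -> //|hi].
by rewrite /= nth_rcons size_inv hi IH.
Qed.

Lemma inv_succ (K : fieldType) (g : ps K) n : ps_inv g n.+1 =
  - (g 0%N)^-1 * \sum_(i < n.+1) g (n.+1 - i)%N * ps_inv g i.
Proof.
rewrite /ps_inv /= nth_rcons size_inv ltnn eqxx; congr (_ * _).
by apply: eq_bigr => i _; rewrite nth_inv // -ltnS.
Qed.

Lemma inv_mul (K : fieldType) (g : ps K) m : g 0%N != 0 ->
  ps_mul (ps_inv g) g m = (m == 0)%:R.
Proof.
move=> h0; case: m => [|n].
  by rewrite /ps_mul big_ord1 /ps_inv /= mulVf.
rewrite /ps_mul big_ord_recr /= subnn inv_succ.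
rewrite mulrC mulrA mulrN mulfV // mulN1r.
under eq_bigr do rewrite mulrC.
by rewrite addrN.
Qed.

Lemma natr_nz (K : fieldType) (hchar : [pchar K] =i pred0) n :
  (n != 0)%N -> n%:R != 0 :> K.
Proof. by move=> h; rewrite ((pcharf0P K).1 hchar n). Qed.

Ltac nzt hchar := rewrite ?(addrC 1) ?natr1 -?natrD ?((pcharf0P _).1 hchar) ?oner_eq0; lia.

Lemma gbinomS (K : fieldType) (a : K) n :
  gbinom a n.+1 = gbinom a n * (a - n%:R) / (n.+1)%:R.
Proof.
rewrite /gbinom big_ord_recr /= factS natrM invfM; ring.
Qed.

Lemma S0 (K : fieldType) : ps_sqrt1m4 K 0 = 1.
Proof. by rewrite /ps_sqrt1m4 /gbinom big_ord0 fact0 divr1 mulr1. Qed.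

Lemma S_rec (K : fieldType) (hchar : [pchar K] =i pred0) n :
  (n.+1)%:R * ps_sqrt1m4 K n.+1 = (4 * n%:R - 2) * ps_sqrt1m4 K n.
Proof.
have h1 := natr_nz hchar (isT : n.+1 != 0)%N.
have h2 := natr_nz hchar (isT : 2 != 0)%N.
rewrite /ps_sqrt1m4 gbinomS exprS; field.
by rewrite addrC natr1 h1 h2.
Qed.

Lemma bin_rec m : ('C(m.+1.*2, m.+1) * m.+1 = 2 * (m.*2.+1) * 'C(m.*2, m))%N.
Proof.
have e1 := mul_bin_diag (m.+1.*2) m.
have e2 := mul_bin_diag (m.*2.+1) m.
have e3 : 'C(m.*2.+1, m.+1) = 'C(m.*2.+1, m).
  have hm : (m <= m.*2.+1)%N by lia.
  rewrite -[RHS](bin_sub hm); congr 'C(_, _); lia.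
rewrite e3 /= in e2. rewrite doubleS /= in e1 *.
move: e1 e2; set a := 'C(_.+2, _); set b := 'C(_.+1, _); set c := 'C(_, _).
rewrite -!muln2 => e1 e2.
rewrite mulnC -e1 -mulnA e2; ring.
Qed.

Lemma catalanS (K : fieldType) (hchar : [pchar K] =i pred0) m :
  catalan K m = - ps_sqrt1m4 K m.+1 / 2.
Proof.
have h2 := natr_nz hchar (isT : 2 != 0)%N.
elim: m => [|m IH].
  rewrite /catalan /ps_sqrt1m4 gbinomS /gbinom big_ord0 fact0 /= bin0.
  field; by rewrite h2 oner_eq0.
have hm1 := natr_nz hchar (isT : m.+1 != 0)%N.
have hm2 := natr_nz hchar (isT : m.+2 != 0)%N.
have eS := S_rec hchar m.+1.
have eC : catalan K m.+1 = 2 * (m.*2.+1)%:R * catalan K m / (m.+2)%:R.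
  rewrite /catalan.
  have := congr1 (fun k => k%:R : K) (bin_rec m); rewrite /= !natrM => e.
  have ea : ('C(m.+1.*2, m.+1))%:R = 2 * (m.*2.+1)%:R * ('C(m.*2, m))%:R / (m.+1)%:R :> K.
    by rewrite -e mulfK.
  rewrite ea; field. nzt hchar.
rewrite eC IH.
have -> : ps_sqrt1m4 K m.+2 = (4 * (m.+1)%:R - 2) * ps_sqrt1m4 K m.+1 / (m.+2)%:R.
  by rewrite -eS mulrC mulKf.
rewrite -muln2 -[((m * 2).+1)%:R]natr1 natrM.
field. nzt hchar.
Qed.

Lemma sym_sum (K : fieldType) (f : ps K) m :
  \sum_(i < m.+1) (i%:R * f i * f (m - i)%N) =
  \sum_(i < m.+1) ((m - i)%:R * f i * f (m - i)%N).
Proof.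
rewrite (reindex_inj rev_ord_inj) /=; apply: eq_bigr => i _.
have hi := ltn_ord i.
rewrite subSS subKn; last by lia.
by rewrite mulrAC.
Qed.

Lemma two_sum (K : fieldType) (f : ps K) m :
  2 * \sum_(i < m.+1) (i%:R * f i * f (m - i)%N) = m%:R * ps_mul f f m.
Proof.
rewrite mulr_natl mulr2n {2}sym_sum -big_split /ps_mul mulr_sumr.
apply: eq_bigr => i _; have hi := ltn_ord i.
by rewrite /= -!mulrA -mulrDl -natrD subnKC //; lia.
Qed.

Lemma T_rec (K : fieldType) (hchar : [pchar K] =i pred0) n :
  (n.+1)%:R * ps_mul (ps_sqrt1m4 K) (ps_sqrt1m4 K) n.+1 =
  (4 * n%:R - 4) * ps_mul (ps_sqrt1m4 K) (ps_sqrt1m4 K) n.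
Proof.
set S := ps_sqrt1m4 K.
rewrite -two_sum big_ord_recl /= mul0r mul0r add0r.
under eq_bigr => i _ do rewrite /bump /= add1n subSS S_rec //.
set A := \sum_(i < n.+1) (i%:R * S i * S (n - i)%N).
have E : \sum_(i < n.+1) ((4 * i%:R - 2) * S i * S (n - i)%N) =
         4 * A - 2 * ps_mul S S n.
  rewrite /A /ps_mul !mulr_sumr -sumrB; apply: eq_bigr => i _; ring.
rewrite E.
have E2 := two_sum S n. rewrite -/A in E2.
transitivity (4 * (2 * A) - 4 * ps_mul S S n); first ring.
rewrite E2; ring.
Qed.

Lemma T0 (K : fieldType) : ps_mul (ps_sqrt1m4 K) (ps_sqrt1m4 K) 0 = 1.
Proof. by rewrite /ps_mul big_ord1 S0 mulr1. Qed.

Lemma T1 (K : fieldType) (hchar : [pchar K] =i pred0) :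
  ps_mul (ps_sqrt1m4 K) (ps_sqrt1m4 K) 1 = -4.
Proof. have := T_rec hchar 0; rewrite T0 mul1r mulr0 mulr1 add0r. done. Qed.

Lemma T2 (K : fieldType) (hchar : [pchar K] =i pred0) k :
  ps_mul (ps_sqrt1m4 K) (ps_sqrt1m4 K) k.+2 = 0.
Proof.
elim: k => [|k IH].
  have := T_rec hchar 1; rewrite mulr1 subrr mul0r => /eqP.
  rewrite mulf_eq0 => /orP [|/eqP //].
  by rewrite (negbTE (natr_nz hchar (isT : 2 != 0)%N)).
have := T_rec hchar k.+2; rewrite IH mulr0 => /eqP.
rewrite mulf_eq0 => /orP [|/eqP //].
by rewrite (negbTE (natr_nz hchar (isT : k.+3 != 0)%N)).
Qed.

Definition sc (K : fieldType) (c : K) (f : ps K) : ps K := fun n => c ^+ n * f n.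

Lemma sc_mul (K : fieldType) (c : K) f g n :
  sc c (ps_mul f g) n = ps_mul (sc c f) (sc c g) n.
Proof.
rewrite /sc /ps_mul mulr_sumr; apply: eq_bigr => i _.
have hi : (i <= n)%N by rewrite -ltnS.
have -> : c ^+ n = c ^+ i * c ^+ (n - i) by rewrite -exprD subnKC.
ring.
Qed.

Definition Fs (K : fieldType) (q lq : K) : ps K :=
  ps_mul (sc (-4) (Dnum q lq)) (sc (-4) (ps_inv (Dden q))).
Definition Cs (K : fieldType) : ps K := fun n => if n is m.+1 then catalan K m else 0.
Definition hh (K : fieldType) (q lq : K) : ps K :=
  fun n => (1 + q) / 2 * Fs q lq n - q * ps_mul (Cs K) (Fs q lq) n.

Lemma coef2 (K : fieldType) (p : {poly K}) i : (2 * p)`_i = 2 * p`_i.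
Proof. by rewrite mulr_natl coefMn mulr_natl. Qed.

Ltac zzc := first [ assumption | (apply: zzN; zzc) | (apply: zzM; zzc) | (apply: zzD; [zzc|zzc]) ].

Lemma main_eq (K : fieldType) (q lq : K)
  (hchar : [pchar K] =i pred0)
  (hq1 : q != 1) (hqm1 : q != -1) (hlq : lq != 0) n :
  zz n (tr n (hh q lq) - tr n (dq q lq)).
Proof.
have h2 := natr_nz hchar (isT : 2 != 0)%N.
set Q := q%:P.
set P : {poly K} := Q * Q - 1 - 4 * (Q * (Q * 'X)).
set pF := tr n (Fs q lq).
set pD := tr n (sc (-4) (Dnum q lq)).
set pJ := tr n (sc (-4) (ps_inv (Dden q))).
set pDD := tr n (sc (-4) (Dden q)).
set pd := tr n (dnum q lq).
set pE := tr n (dden q).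
set pI := tr n (ps_inv (dden q)).
set pS := tr n (ps_sqrt1m4 K).
set pC := tr n (Cs K).
set pY := tr n (ps_mul (Cs K) (Fs q lq)).
set ph := tr n (hh q lq).
set pq := tr n (dq q lq).
have hD0 : Dden q 0%N != 0.
  by rewrite /Dden /= subr_eq0 sqrf_eq1 negb_or hq1 hqm1.
have hd0 : dden q 0%N != 0.
  by rewrite /dden S0 mulr1 /= subr_eq0.
have k1 : zz n (pF - pD * pJ) by exact: zz_mul.
have kDD : zz n (pDD - P).
  apply: zz_tr => i _.
  rewrite /P !coefB coef1 mulr_natl coefMn !coefCM coefC coefX /sc /Dden.
  case: i => [|[|i]] /=; ring.
have kmJ : zz n (tr n (ps_mul (sc (-4) (ps_inv (Dden q))) (sc (-4) (Dden q))) - 1).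
  apply: zz_tr => i _; rewrite -sc_mul /sc inv_mul // coef1.
  by case: i => [|i] /=; rewrite ?expr0 ?mulr1 ?mulr0.
have k2 : zz n (pJ * P - 1).
  apply: (zzE (q := - (pJ * (pDD - P)) - (tr n (ps_mul (sc (-4) (ps_inv (Dden q))) (sc (-4) (Dden q))) - pJ * pDD) + (tr n (ps_mul (sc (-4) (ps_inv (Dden q))) (sc (-4) (Dden q))) - 1))); first ring.
  apply: zzD; [apply: zzD|exact: kmJ].
    by apply: zzN; apply: zzM.
  by apply: zzN; exact: zz_mul.
have k3 : zz n (pD - 2 * pd).
  apply: zz_tr => i hi; rewrite coef2 coef_tr // /sc /Dnum /dnum /ps_log1p.
  case: i {hi} => [|i] /=; first ring.
  rewrite expr1n; field. rewrite hlq andbT; nzt hchar.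
have k4 : zz n (pE - (Q * pS - 1)).
  apply: zz_tr => i hi; rewrite coefB coefCM coef_tr // coef1 /dden.
  by case: i {hi}.
have k5 : zz n (pS * pS - (1 - 4 * 'X)).
  apply: (zzE (q := - (tr n (ps_mul (ps_sqrt1m4 K) (ps_sqrt1m4 K)) - pS * pS) + (tr n (ps_mul (ps_sqrt1m4 K) (ps_sqrt1m4 K)) - (1 - 4 * 'X)))); first ring.
  apply: zzD; first by apply: zzN; exact: zz_mul.
  apply: zz_tr => i _; rewrite coefB coef1 mulr_natl coefMn coefX.
  case: i => [|[|i]] /=; rewrite ?T0 ?(T1 hchar) ?(T2 hchar); ring.
have k6 : zz n (2 * pC - (1 - pS)).
  move=> i hi; rewrite coefB coef2 coefB coef1 !coef_tr //.
  case: i {hi} => [|i] /=; first by rewrite S0; ring.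
  rewrite (catalanS hchar); field; nzt hchar.
have k7 : zz n (2 * ph - (pF + Q * pF - 2 * (Q * pY))).
  move=> i hi; rewrite coefB coef2 !coefD coefN coef2 !coefCM !coef_tr // /hh.
  field; nzt hchar.
have k12 : zz n (pY - pC * pF) by exact: zz_mul.
have k8 : zz n (pq - pd * pI).
  have -> : pq = tr n (ps_mul (dnum q lq) (ps_inv (dden q))) by [].
  exact: zz_mul.
have k9 : zz n (pI * pE - 1).
  apply: (zzE (q := (tr n (ps_mul (ps_inv (dden q)) (dden q)) - 1) - (tr n (ps_mul (ps_inv (dden q)) (dden q)) - pI * pE))); first ring.
  apply: zzD; last by apply: zzN; exact: zz_mul.
  by apply: zz_tr => i _; rewrite inv_mul // coef1.
have s1 : zz n (pF * P - 2 * pd).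
  apply: (zzE (q := P * (pF - pD * pJ) + pD * (pJ * P - 1) + (pD - 2 * pd))); first ring.
  by apply: zzD; [apply: zzD|]; rewrite // ?zzM //; apply: zzM.
have s2 : zz n (2 * (ph * pE - pd)).
  apply: (zzE (q := pE * (2 * ph - (pF + Q * pF - 2 * (Q * pY)))
    - 2 * Q * pE * (pY - pC * pF) - Q * pF * pE * (2 * pC - (1 - pS))
    + pF * (1 + Q * pS) * (pE - (Q * pS - 1)) + pF * Q * Q * (pS * pS - (1 - 4 * 'X))
    + (pF * P - 2 * pd))); first (rewrite /P; ring).
  zzc.
have s3 : zz n (ph * pE - pd) by exact: zz2 s2.
apply: (zzE (q := - ph * (pI * pE - 1) + pI * (ph * pE - pd) - (pq - pd * pI))); first ring.
zzc.
Qed.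

Lemma FsE (K : fieldType) (q lq : K) (hchar : [pchar K] =i pred0) k :
  Fs q lq k = (-4) ^+ k / (k`!)%:R * Dq q lq k.
Proof.
have hf := natr_nz hchar (lt0n_neq0 (fact_gt0 k)).
by rewrite /Fs -sc_mul /Dq /sc /ps_div mulrA mulfVK.
Qed.

Theorem theorem1 (K : fieldType) (q lq : K)
  (hchar : [pchar K] =i pred0)
  (hq1 : q != 1) (hqm1 : q != -1) (hlq : lq != 0) (n : nat) :
  dq q lq n =
    if n == 0%N then 1
    else (1 + q) / 2 * ((-4) ^+ n / (n`!)%:R) * Dq q lq n
         - q * \sum_(m < n) ((-4) ^+ (n - m - 1) / ((n - m - 1)`!)%:R
                             * Dq q lq (n - m - 1) * catalan K m).
Proof.
case: n => [|k] /=.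
  rewrite /dq /ps_div /ps_mul big_ord1 /ps_inv /= /dnum /dden /ps_log1p /= S0.
  by rewrite mulr0 mulr0 addr0 mulr1 mulfV // subr_eq0.
have := main_eq hchar hq1 hqm1 hlq (leqnn k.+1).
rewrite coefB !coef_tr // => /eqP; rewrite subr_eq0 => /eqP <-.
rewrite /hh FsE // mulrA; congr (_ - _ * _).
rewrite /ps_mul big_ord_recl /= mul0r add0r.
apply: eq_bigr => i _; rewrite FsE // mulrC.
have -> : (k.+1 - i - 1 = k.+1 - (bump 0 i))%N by rewrite /bump; lia.
done.
Qed.
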